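(* Let $\mathcal{X}\subseteq\mathbb{R}^d$ be nonempty, closed and convex, and let $f=\frac1n\sum_{i=1}^nf_i$, where each $f_i:\mathbb{R}^d\to\mathbb{R}$ is differentiable, $\mu_i$-strongly convex and $L_i$-smooth on an open convex set containing $\mathcal{X}$, with $0<\mu_i\le L_i$. Let $x_\star\in\operatorname{arg\,min}_{x\in\mathcal{X}}f(x)$, $x_{\star,i}\in\operatorname{arg\,min}_{x\in\mathcal{X}}f_i(x)$, and $D:=\max_i\|x_{\star,i}-x_\star\|$. Define $\theta_i:=\frac{2\sqrt{\mu_iL_i}}{L_i+\mu_i}$, $\rho_i:=\frac{L_i-\mu_i}{L_i+\mu_i}=\sqrt{1-\theta_i^2}$, $\bar\rho:=\frac1n\sum_{i=1}^n\rho_i$. Let $x_0\in\mathcal{X}$, let $i_k$ be sampled uniformly from $\{1,\dots,n\}$ independently of the past, and let $x_{k+1}\in\operatorname{arg\,min}_{z\in\mathcal{X}\cap\mathcal{B}(x_k,t_k)}\langle\nabla f_{i_k}(x_k),z\rangle$ with $t_k:=\theta_{i_k}\|x_k-x_{\star,i_k}\|$. Then for every $k\ge0$, $\|x_{k+1}-x_{\star,i_k}\|^2\le\rho_{i_k}^2\|x_k-x_{\star,i_k}\|^2$, and consequently $$\mathbb{E}\|x_k-x_\star\|\le\bar\rho^k\|x_0-x_\star\|+\frac{1+\bar\rho}{1-\bar\rho}D.$$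
   Context: $\|\cdot\|$ is the Euclidean norm, $\mathcal{B}(x,t):=\{y:\|y-x\|\le t\}$; $L_i$-smooth: $\nabla f_i$ is $L_i$-Lipschitz; $\mu_i$-strongly convex: $f_i(y)\ge f_i(x)+\langle\nabla f_i(x),y-x\rangle+\frac{\mu_i}2\|y-x\|^2$. *)

(* Defs.v *)
From HB Require Import structures.
From mathcomp Require Import all_boot all_order all_algebra.
From mathcomp Require Import all_classical all_reals all_analysis.
Set Implicit Arguments. Unset Strict Implicit. Unset Printing Implicit Defensive.
Import Order.TTheory GRing.Theory Num.Theory.
Import numFieldNormedType.Exports.
Local Open Scope classical_set_scope.
Local Open Scope ring_scope.

(* Euclidean inner product and Euclidean norm (the library norm on matrices is
   the max norm, so we define the Euclidean one explicitly). *)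
Definition dotv {R : realType} {d : nat} (u v : 'rV[R]_d) : R :=
  \sum_(j < d) u ord0 j * v ord0 j.

Definition enorm {R : realType} {d : nat} (u : 'rV[R]_d) : R :=
  Num.sqrt (dotv u u).

Definition eball {R : realType} {d : nat} (x : 'rV[R]_d) (t : R) : set 'rV[R]_d :=
  [set y | enorm (y - x) <= t].

Definition grad {R : realType} {d : nat} (f : 'rV[R]_d -> R) (x : 'rV[R]_d) : 'rV[R]_d :=
  \row_(j < d) ('d f x) (delta_mx ord0 j : 'rV[R]_d).

Definition convex_set_ {R : realType} {d : nat} (A : set 'rV[R]_d) : Prop :=
  forall x y t, A x -> A y -> 0 <= t -> t <= 1 -> A ((1 - t) *: x + t *: y).

Definition is_argmin {T : Type} {R : realType} (g : T -> R) (A : set T) (x : T) : Prop :=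
  A x /\ forall y, A y -> g x <= g y.

Definition strongly_convex_on {R : realType} {d : nat} (mu : R) (f : 'rV[R]_d -> R)
  (U : set 'rV[R]_d) : Prop :=
  forall x y, U x -> U y ->
    f x + dotv (grad f x) (y - x) + mu / 2 * enorm (y - x) ^+ 2 <= f y.

Definition smooth_on {R : realType} {d : nat} (L : R) (f : 'rV[R]_d -> R)
  (U : set 'rV[R]_d) : Prop :=
  forall x y, U x -> U y -> enorm (grad f x - grad f y) <= L * enorm (x - y).

(* Main.v *)
Require Import Defs.
From HB Require Import structures.
From mathcomp Require Import all_boot all_order all_algebra.
From mathcomp Require Import all_classical all_reals all_analysis.
From mathcomp Require Import ring lra.
Import Order.TTheory GRing.Theory Num.Theory.
Import numFieldNormedType.Exports.
Local Open Scope classical_set_scope.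
Local Open Scope ring_scope.

Module Helpers.
Set Implicit Arguments. Unset Strict Implicit.

Section Vec.
Variables (R : realType) (d : nat).
Implicit Types (u v w : 'rV[R]_d) (a b : R).

Lemma dotvC u v : dotv u v = dotv v u.
Proof. by apply: eq_bigr => j _; rewrite mulrC. Qed.
Lemma dotvDl u v w : dotv (u + v) w = dotv u w + dotv v w.
Proof. by rewrite /dotv -big_split; apply: eq_bigr => j _; rewrite !mxE mulrDl. Qed.
Lemma dotvDr u v w : dotv w (u + v) = dotv w u + dotv w v.
Proof. by rewrite dotvC dotvDl !(dotvC w). Qed.
Lemma dotvZl a u v : dotv (a *: u) v = a * dotv u v.
Proof. by rewrite /dotv mulr_sumr; apply: eq_bigr => j _; rewrite !mxE mulrA. Qed.
Lemma dotvZr a u v : dotv v (a *: u) = a * dotv v u.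
Proof. by rewrite dotvC dotvZl dotvC. Qed.
Lemma dotvNl u v : dotv (- u) v = - dotv u v.
Proof. by rewrite -scaleN1r dotvZl mulN1r. Qed.
Lemma dotvNr u v : dotv v (- u) = - dotv v u.
Proof. by rewrite dotvC dotvNl dotvC. Qed.
Lemma dotvBl u v w : dotv (u - v) w = dotv u w - dotv v w.
Proof. by rewrite dotvDl dotvNl. Qed.
Lemma dotvBr u v w : dotv w (u - v) = dotv w u - dotv w v.
Proof. by rewrite dotvDr dotvNr. Qed.
Lemma dotv0l u : dotv 0 u = 0.
Proof. by rewrite /dotv big1 // => j _; rewrite mxE mul0r. Qed.
Lemma dotv0r u : dotv u 0 = 0.
Proof. by rewrite dotvC dotv0l. Qed.
Lemma dotv_ge0 u : 0 <= dotv u u.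
Proof. by apply: sumr_ge0 => j _; rewrite -expr2 sqr_ge0. Qed.
Lemma enorm_ge0 u : 0 <= enorm u.
Proof. exact: sqrtr_ge0. Qed.
Lemma enorm_sq u : enorm u ^+ 2 = dotv u u.
Proof. by rewrite sqr_sqrtr // dotv_ge0. Qed.

Lemma dotv_eq0 u v : dotv u u = 0 -> dotv u v = 0.
Proof.
move=> /eqP; rewrite psumr_eq0 => [/allP H|j _]; last by rewrite -expr2 sqr_ge0.
rewrite /dotv big1 // => j _.
have := H j (mem_index_enum _); rewrite -expr2 sqrf_eq0 => /eqP ->; by rewrite mul0r.
Qed.

Lemma CS u v : dotv u v <= enorm u * enorm v.
Proof.
have [A0|A0] := eqVneq (enorm u) 0.
  have H0 : dotv u u = 0 by rewrite -enorm_sq A0 expr0n.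
  by rewrite (dotv_eq0 v H0) A0 mul0r.
have [B0|B0] := eqVneq (enorm v) 0.
  have H0 : dotv v v = 0 by rewrite -enorm_sq B0 expr0n.
  by rewrite dotvC (dotv_eq0 u H0) B0 mulr0.
have Ap : 0 < enorm u by rewrite lt0r A0 enorm_ge0.
have Bp : 0 < enorm v by rewrite lt0r B0 enorm_ge0.
have := dotv_ge0 (enorm v *: u - enorm u *: v).
rewrite !(dotvBl, dotvBr, dotvZl, dotvZr) -!enorm_sq (dotvC v u).
set A := enorm u; set B := enorm v; set c := dotv u v => H.
have : 2 * A * B * c <= 2 * A * B * (A * B) by nra.
by rewrite ler_pM2l // !mulr_gt0.
Qed.

Lemma CSabs u v : `|dotv u v| <= enorm u * enorm v.
Proof.
rewrite ler_norml CS andbT.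
by have := CS (- u) v; rewrite dotvNl /enorm dotvNl dotvNr opprK; lra.
Qed.

End Vec.

Lemma lim_le (R : realType) (a b c : R) : 0 <= c ->
  (forall N : nat, a <= b + c / N.+1%:R) -> a <= b.
Proof.
move=> c0 H; rewrite leNgt; apply/negP => ba.
have ab0 : 0 < a - b by rewrite subr_gt0.
have [K KE] : {K | K = c / (a - b)} by exists (c / (a - b)).
have K0 : 0 <= K by rewrite KE divr_ge0 // ltW.
move: (archi_boundP K0); move: (Num.Def.archi_bound K) => N hN.
have hN1 : K < N.+1%:R.
  by apply: (lt_le_trans hN); rewrite ler_nat.
have N0 : 0 < N.+1%:R :> R by rewrite ltr0n.
have h1 : c < N.+1%:R * (a - b) by rewrite -ltr_pdivrMr // -KE.
have h2 : c / N.+1%:R < a - b by rewrite ltr_pdivrMr // mulrC.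
have h3 := H N.
have : a < a by apply: (le_lt_trans h3); rewrite addrC -ltrBrDr.
by rewrite ltxx.
Qed.

Lemma coord_le (R : realType) d (e : 'rV[R]_d) j : e ord0 j ^+ 2 <= dotv e e.
Proof.
rewrite /dotv (bigD1 j) //= -expr2 lerDl; apply: sumr_ge0 => i _.
by rewrite -expr2 sqr_ge0.
Qed.

Lemma open_ball (R : realType) d (U : set 'rV[R]_d) a : open U -> U a ->
  exists2 del, 0 < del & forall e, dotv e e <= del ^+ 2 -> U (a + e).
Proof.
move=> oU Ua.
have : nbhs a U by apply: oU.
case/nbhs_ballP => eps eps0 hb.
have {}eps0 : 0 < eps by []. exists (eps / 2); first by lra.
move=> e he; apply: hb.
rewrite mx_norm_ball /ball_ /=.
have -> : a - (a + e) = - e by rewrite opprD addNKr.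
change (mx_norm (- e) < eps); rewrite mx_normN mx_normrE.
apply: bigmax_lt => // -[i j] _ /=.
have -> : i = ord0 by apply/val_inj; case: i => -[].
have h1 := coord_le e j.
have h2 : e ord0 j ^+ 2 <= (eps / 2) ^+ 2 by apply: le_trans he.
have h3 : `|e ord0 j| ^+ 2 = e ord0 j ^+ 2 by rewrite real_normK ?num_real.
have h4 := normr_ge0 (e ord0 j).
nra.
Qed.

Section Core.
Variables (R : realType) (d : nat) (U : set 'rV[R]_d) (f : 'rV[R]_d -> R)
  (G : 'rV[R]_d -> 'rV[R]_d) (mu L : R).
Hypotheses (mu0 : 0 < mu) (muL : mu <= L) (Uc : convex_set_ U)
 (SC : forall x y, U x -> U y ->
    f x + dotv (G x) (y - x) + mu / 2 * enorm (y - x) ^+ 2 <= f y)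
 (Lip : forall x y, U x -> U y -> enorm (G x - G y) <= L * enorm (x - y)).

Local Notation dv := (@dotv R d).

Lemma SC' x y : U x -> U y ->
  f x + dv (G x) (y - x) + mu / 2 * dv (y - x) (y - x) <= f y.
Proof. by move=> Ux Uy; rewrite -enorm_sq; apply: SC. Qed.

Lemma dvN2 (u v : 'rV[R]_d) : dv (v - u) (v - u) = dv (u - v) (u - v).
Proof. by rewrite -opprB dotvNl dotvNr opprK. Qed.

Lemma mono a b : U a -> U b -> mu * dv (a - b) (a - b) <= dv (G a - G b) (a - b).
Proof.
move=> Ua Ub; have h1 := SC' Ua Ub; have h2 := SC' Ub Ua.
rewrite dvN2 in h1.
have e1 : dv (G a) (b - a) = - dv (G a) (a - b) by rewrite -opprB dotvNr.
rewrite e1 in h1; rewrite [dv (G a - G b) _]dotvBl; lra.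
Qed.

Lemma Lip1 a b : U a -> U b -> dv (G a - G b) (a - b) <= L * dv (a - b) (a - b).
Proof.
move=> Ua Ub; apply: (le_trans (CS _ _)).
rewrite -enorm_sq expr2 mulrA ler_wpM2r ?enorm_ge0 //; exact: Lip.
Qed.

Lemma L0 : 0 <= L. Proof. exact: le_trans (ltW mu0) muL. Qed.

Lemma Lip2 a b : U a -> U b -> dv (G a - G b) (G a - G b) <= L ^+ 2 * dv (a - b) (a - b).
Proof.
move=> Ua Ub; rewrite -!enorm_sq.
have h := Lip Ua Ub; have h0 := enorm_ge0 (G a - G b); have h1 := enorm_ge0 (a - b).
have := L0; nra.
Qed.


Lemma seg_in x z t : U x -> U z -> 0 <= t -> t <= 1 -> U (x + t *: (z - x)).
Proof.
move=> Ux Uz t0 t1.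
have -> : x + t *: (z - x) = (1 - t) *: x + t *: z.
  by apply/rowP => j; rewrite !mxE; ring.
exact: Uc.
Qed.

Lemma desc_N x z (N : nat) : U x -> U z ->
  f z <= f x + dv (G x) (z - x) + L / 2 * dv (z - x) (z - x)
         + L * dv (z - x) (z - x) / N.+1%:R.
Proof.
move=> Ux Uz.
have [v vE] : {v | v = z - x} by exists (z - x).
rewrite -vE.
have [h hE] : {h : R | h = N.+1%:R^-1} by exists N.+1%:R^-1.
have h0 : 0 < h by rewrite hE invr_gt0 ltr0n.
have Nh : N.+1%:R * h = 1 by rewrite hE mulfV // pnatr_eq0.
have V0 : 0 <= dv v v := dotv_ge0 v.
have g0 := L0.
have ptU : forall k, (k <= N.+1)%N -> U (x + (k%:R * h) *: v).
  move=> k kN; rewrite vE; apply: seg_in => //.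
    by rewrite mulr_ge0 // ltW.
  by rewrite -[X in _ <= X]Nh ler_pM2r // ler_nat.
have claim : forall k, (k <= N.+1)%N ->
   f (x + (k%:R * h) *: v) <= f x + k%:R * h * dv (G x) v
        + L * dv v v * (k%:R * (k%:R + 1)) * h ^+ 2 / 2.
  elim=> [|k IH] kN.
    rewrite mul0r scale0r addr0; lra.
  have {}IH := IH (ltnW kN).
  have Up := ptU _ kN; have Uq := ptU _ (ltnW kN).
  have h1 := SC' Up Uq.
  have e1 : (x + (k%:R * h) *: v) - (x + (k.+1%:R * h) *: v) = - (h *: v).
    by apply/rowP => j; rewrite !mxE -natr1; ring.
  rewrite e1 dotvNr dotvNl dotvNr opprK !dotvZl !dotvZr in h1.
  have h2 := Lip1 Up Ux.
  have e2 : (x + (k.+1%:R * h) *: v) - x = (k.+1%:R * h) *: v.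
    by apply/rowP => j; rewrite !mxE; ring.
  rewrite e2 !dotvZl !dotvZr dotvBl in h2.
  have kh0 : 0 < k.+1%:R * h by rewrite mulr_gt0 // ltr0n.
  set A := dv (G (x + (k.+1%:R * h) *: v)) v in h1 h2 *.
  have h3 : A <= dv (G x) v + L * (k.+1%:R * h) * dv v v.
    rewrite -(ler_pM2l kh0); nra.
  have h4 : h * A <= h * (dv (G x) v + L * (k.+1%:R * h) * dv v v).
    by rewrite ler_pM2l.
  set P1 := f (x + (k.+1%:R * h) *: v) in h1 *.
  set P0 := f (x + (k%:R * h) *: v) in h1 IH.
  rewrite -natr1 in h4 *.
  have h5 : 0 <= mu / 2 * (h * (h * dv v v)).
    by rewrite mulr_ge0 ?mulr_ge0 // ?ltW // divr_ge0 // ltW.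
  nra.
have H := claim _ (leqnn N.+1).
rewrite Nh scale1r vE addrC subrK -vE in H.
have e5 : N.+1%:R * (N.+1%:R + 1) * h ^+ 2 = 1 + h.
  have -> : N.+1%:R * (N.+1%:R + 1) * h ^+ 2 = (N.+1%:R * h) * (N.+1%:R * h + h).
    by rewrite expr2; ring.
  by rewrite Nh mul1r.
have e6 : L * dv v v / N.+1%:R = L * dv v v * h by rewrite hE.
have e7 : L * dv v v * (N.+1%:R * (N.+1%:R + 1)) * h ^+ 2 = L * dv v v * (1 + h).
  by rewrite -e5; ring.
rewrite e7 in H; rewrite e6.
have : 0 <= L * dv v v * h by rewrite !mulr_ge0 // ltW.
move: H; rewrite mul1r; lra.
Qed.

Lemma desc x z : U x -> U z ->
  f z <= f x + dv (G x) (z - x) + L / 2 * dv (z - x) (z - x).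
Proof.
move=> Ux Uz; apply: (@lim_le _ _ _ (L * dv (z - x) (z - x))).
  by rewrite mulr_ge0 ?L0 ?dotv_ge0.
by move=> N; apply: desc_N.
Qed.

Definition phi z := f z - mu / 2 * dv z z.
Definition P z := G z - mu *: z.
Definition kk := L - mu.

Lemma conv_phi x z : U x -> U z -> phi x + dv (P x) (z - x) <= phi z.
Proof.
move=> Ux Uz; have := SC' Ux Uz; rewrite /phi /P.
rewrite !(dotvBl, dotvBr, dotvZl, dotvZr) (dotvC z x).
nra.
Qed.

Lemma desc_phi x z : U x -> U z ->
  phi z <= phi x + dv (P x) (z - x) + kk / 2 * dv (z - x) (z - x).
Proof.
move=> Ux Uz; have := desc Ux Uz; rewrite /phi /P /kk.
rewrite !(dotvBl, dotvBr, dotvZl, dotvZr) (dotvC z x).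
nra.
Qed.

Lemma half a b : 0 < kk -> U a -> U b -> U (b - kk^-1 *: (P b - P a)) ->
  phi a + dv (P a) (b - a) + kk^-1 / 2 * dv (P b - P a) (P b - P a) <= phi b.
Proof.
move=> k0 Ua Ub Ucc.
have h1 := conv_phi Ua Ucc; have h2 := desc_phi Ub Ucc.
move: h1 h2.
set q := P b - P a.
have -> : b - kk^-1 *: q - a = (b - a) - kk^-1 *: q.
  by apply/rowP => j; rewrite !mxE; ring.
have -> : b - kk^-1 *: q - b = - (kk^-1 *: q).
  by apply/rowP => j; rewrite !mxE; ring.
rewrite [dv (P a) (b - a - _)]dotvBr !(dotvNl, dotvNr, dotvZl, dotvZr) opprK.
have h3 : dv (P b) q - dv (P a) q = dv q q by rewrite -dotvBl.
have h4 : kk / 2 * (kk^-1 * (kk^-1 * dv q q)) = kk^-1 / 2 * dv q q.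
  by field; rewrite lt0r_neq0.
rewrite h4.
have h5 : kk^-1 * dv (P b) q - kk^-1 * dv (P a) q = kk^-1 * dv q q.
  by rewrite -mulrBr h3.
move=> ? ?; lra.
Qed.

Lemma local_coco a b : 0 < kk -> U a -> U b ->
  U (b - kk^-1 *: (P b - P a)) -> U (a - kk^-1 *: (P a - P b)) ->
  dv (P b - P a) (P b - P a) <= kk * dv (P b - P a) (b - a).
Proof.
move=> k0 Ua Ub H1 H2.
have h1 := half k0 Ua Ub H1; have h2 := half k0 Ub Ua H2.
rewrite -(opprB (P b)) dotvNl dotvNr opprK -(opprB b a) dotvNr in h2.
have h3 : dv (P b - P a) (b - a) = dv (P b) (b - a) - dv (P a) (b - a) by rewrite dotvBl.
have h4 : kk^-1 * dv (P b - P a) (P b - P a) <= dv (P b - P a) (b - a) by lra.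
rewrite -(ler_pM2l k0) mulrA mulfV ?lt0r_neq0 // mul1r in h4.
exact: h4.
Qed.

Lemma normLipP a b : U a -> U b ->
  dv (P a - P b) (P a - P b) <= (L ^+ 2 - mu ^+ 2) * dv (a - b) (a - b).
Proof.
move=> Ua Ub; have h1 := Lip2 Ua Ub; have h2 := mono Ua Ub.
have -> : P a - P b = (G a - G b) - mu *: (a - b).
  by apply/rowP => j; rewrite /P !mxE; ring.
move: (G a - G b) (a - b) h1 h2 => w u h1 h2.
rewrite !(dotvBl, dotvBr, dotvZl, dotvZr) (dotvC u w).
have := mu0; nra.
Qed.

Lemma first_order (X : set 'rV[R]_d) xs w : convex_set_ X -> X `<=` U ->
  is_argmin f X xs -> X w -> 0 <= dv (G xs) (w - xs).
Proof.
move=> Xc XU [Xxs xmin] Xw.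
have [v vE] : {v | v = w - xs} by exists (w - xs).
rewrite -vE.
apply: (@lim_le _ _ _ (L * dv v v)); first by rewrite mulr_ge0 ?L0 ?dotv_ge0.
move=> N.
have [s sE] : {s : R | s = N.+1%:R^-1} by exists N.+1%:R^-1.
have s0 : 0 < s by rewrite sE invr_gt0 ltr0n.
have s1 : s <= 1 by rewrite sE invf_le1 ?ltr0n // ler1n.
have Xs : X (xs + s *: v).
  have -> : xs + s *: v = (1 - s) *: xs + s *: w.
    by apply/rowP => j; rewrite vE !mxE; ring.
  by apply: Xc => //; apply: ltW.
have hf := xmin _ Xs.
have h1 := SC' (XU _ Xs) (XU _ Xxs).
have e1 : xs - (xs + s *: v) = - (s *: v) by apply/rowP => j; rewrite !mxE; ring.
rewrite e1 !(dotvNl, dotvNr, dotvZl, dotvZr) in h1.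
have h2 := Lip1 (XU _ Xs) (XU _ Xxs).
have e2 : xs + s *: v - xs = s *: v by apply/rowP => j; rewrite !mxE; ring.
rewrite e2 !(dotvZl, dotvZr) dotvBl in h2.
have V0 := dotv_ge0 v.
have eN : L * dv v v / N.+1%:R = L * dv v v * s by rewrite sE.
rewrite eN.
set A := dv (G (xs + s *: v)) v in h1 h2.
have hA : 0 <= A.
  have : 0 <= mu / 2 * (s * (s * dv v v)) by rewrite !mulr_ge0 // ?ltW // divr_ge0 // ltW.
  move=> h3; rewrite -(pmulr_rge0 _ s0); lra.
have hB : A - dv (G xs) v <= L * s * dv v v.
  rewrite -(ler_pM2l s0); nra.
lra.
Qed.

Hypothesis Uo : forall a, U a ->
  exists2 del, 0 < del & forall e, dv e e <= del ^+ 2 -> U (a + e).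

Lemma glob_coco a b : 0 < kk -> U a -> U b ->
  dv (P b - P a) (P b - P a) <= kk * dv (P b - P a) (b - a).
Proof.
move=> k0 Ua Ub.
have [da da0 Ha] := Uo Ua; have [db db0 Hb] := Uo Ub.
have [del delE] : {del : R | del = Num.min da db} by exists (Num.min da db).
have del0 : 0 < del by rewrite delE lt_min da0 db0.
have Hab : forall e, dv e e <= del ^+ 2 -> U (a + e) /\ U (b + e).
  move=> e he; have h1 : del <= da by rewrite delE ge_min lexx.
  have h2 : del <= db by rewrite delE ge_min lexx orbT.
  split; [apply: Ha | apply: Hb]; apply: (le_trans he); nra.
have [u uE] : {u | u = b - a} by exists (b - a).
have C0 := dotv_ge0 u.
have [K KE] : {K : R | K = (L ^+ 2 - mu ^+ 2) * dv u u / (kk ^+ 2 * del ^+ 2)}.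
  by exists ((L ^+ 2 - mu ^+ 2) * dv u u / (kk ^+ 2 * del ^+ 2)).
have LL : 0 <= L ^+ 2 - mu ^+ 2 by have := mu0; have := muL; nra.
have K0 : 0 <= K by rewrite KE !mulr_ge0 // invr_ge0 mulr_ge0 // sqr_ge0.
move: (archi_boundP K0); move: (Num.Def.archi_bound K) => N hN.
have [h hE] : {h : R | h = N.+1%:R^-1} by exists N.+1%:R^-1.
have h0 : 0 < h by rewrite hE invr_gt0 ltr0n.
have h1 : h <= 1 by rewrite hE invf_le1 ?ltr0n // ler1n.
have Nh : N.+1%:R * h = 1 by rewrite hE mulfV // pnatr_eq0.
have KN : K < N.+1%:R by apply: (lt_le_trans hN); rewrite ler_nat.
have Kh : K * h <= 1.
  rewrite hE ler_pdivrMr ?ltr0n // mul1r; exact: ltW.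
pose p (j : nat) := a + (j%:R * h) *: u.
have pU : forall j, (j <= N.+1)%N -> forall e, dv e e <= del ^+ 2 -> U (p j + e).
  move=> j jN e he; have [Uae Ube] := Hab _ he.
  have -> : p j + e = (a + e) + (j%:R * h) *: ((b + e) - (a + e)).
    by apply/rowP => i; rewrite /p uE !mxE; ring.
  apply: seg_in => //; first by rewrite mulr_ge0 // ltW.
  by rewrite -[X in _ <= X]Nh ler_pM2r // ler_nat.
have pU0 : forall j, (j <= N.+1)%N -> U (p j).
  move=> j jN; rewrite -[p j]addr0; apply: pU => //.
  by rewrite dotv0l; rewrite expr2 mulr_ge0 // ltW.
have step : forall j, (j < N.+1)%N ->
   dv (P (p j.+1) - P (p j)) (P (p j.+1) - P (p j))
     <= kk * h * dv (P (p j.+1) - P (p j)) u.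
  move=> j jN.
  have U1 := pU0 _ jN; have U0 := pU0 _ (ltnW jN).
  have ed : p j.+1 - p j = h *: u.
    by apply/rowP => i; rewrite /p !mxE -natr1; ring.
  have hq := normLipP U1 U0.
  rewrite ed !(dotvZl, dotvZr) in hq.
  set q := P (p j.+1) - P (p j) in hq *.
  have hb : dv (kk^-1 *: q) (kk^-1 *: q) <= del ^+ 2.
    rewrite !(dotvZl, dotvZr).
    have e2 : kk^-1 * (kk^-1 * dv q q) = dv q q / kk ^+ 2.
      by field; rewrite lt0r_neq0.
    rewrite e2 ler_pdivrMr ?exprn_gt0 //.
    apply: (le_trans hq).
    have hh : (L ^+ 2 - mu ^+ 2) * (h * (h * dv u u))
       = K * h * h * (kk ^+ 2 * del ^+ 2).
      by rewrite KE; field; rewrite !lt0r_neq0.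
    rewrite hh.
    have : 0 <= kk ^+ 2 * del ^+ 2 by rewrite mulr_ge0 // sqr_ge0.
    have : K * h * h <= 1 by nra.
    nra.
  have H1 : U (p j.+1 - kk^-1 *: (P (p j.+1) - P (p j))).
    rewrite -/q; apply: pU => //; by rewrite dotvNl dotvNr opprK.
  have H2 : U (p j - kk^-1 *: (P (p j) - P (p j.+1))).
    rewrite -(opprB (P (p j.+1))) -/q scalerN opprK.
    exact: pU (ltnW jN) _ hb.
  have := local_coco k0 U0 U1 H1 H2.
  by rewrite -/q ed dotvZr mulrA.
have claim : forall j, (j <= N.+1)%N -> exists S, [/\ 0 <= S,
    dv (P (p j) - P a) (P (p j) - P a) <= j%:R * S &
    S <= kk * h * dv (P (p j) - P a) u].
  elim=> [_|j IH jN].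
    exists 0; rewrite /p mul0r scale0r addr0 subrr !dotv0l ?mulr0.
    by split.
  have [S [S0 HW HS]] := IH (ltnW jN).
  have hs := step _ jN.
  have eW : P (p j.+1) - P a = (P (p j) - P a) + (P (p j.+1) - P (p j)).
    by apply/rowP => i; rewrite !mxE; ring.
  rewrite eW.
  move: (P (p j) - P a) (P (p j.+1) - P (p j)) HW HS hs => W q HW HS hs.
  exists (S + dv q q); split.
  - by rewrite addr_ge0 ?dotv_ge0.
  - rewrite dotvDl !dotvDr (dotvC q W) -natr1.
    have Q0 := dotv_ge0 q; have W0 := dotv_ge0 W.
    have [j0|jpos] := eqVneq j 0%N.
      rewrite j0 mul0r in HW.
      have WW0 : dv W W = 0 by apply/eqP; rewrite eq_le HW W0.
      rewrite (dotv_eq0 q WW0) j0; lra.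
    have jr0 : 0 < j%:R :> R by rewrite ltr0n lt0n.
    have hx := dotv_ge0 (W - j%:R *: q).
    rewrite !(dotvBl, dotvBr, dotvZl, dotvZr) (dotvC q W) in hx.
    have h2 : (j%:R + 1) * dv W W <= (j%:R + 1) * (j%:R * S).
      by rewrite ler_wpM2l // addr_ge0 // ltW.
    rewrite -(ler_pM2l jr0).
    nra.
  - rewrite dotvDl; lra.
have [S [S0 HW HS]] := claim _ (leqnn N.+1).
have pN : p N.+1 = b by rewrite /p Nh scale1r uE addrC subrK.
rewrite pN -uE in HW HS *.
apply: (le_trans HW).
have : N.+1%:R * S <= N.+1%:R * (kk * h * dv (P b - P a) u).
  by rewrite ler_wpM2l // ler0n.
suff -> : N.+1%:R * (kk * h * dv (P b - P a) u) = kk * dv (P b - P a) u by [].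
set X := dv (P b - P a) u.
have -> : N.+1%:R * (kk * h * X) = kk * X * (N.+1%:R * h) by ring.
by rewrite Nh mulr1.
Qed.

Lemma coco a b : U a -> U b ->
  dv (G b - G a) (G b - G a) + mu * L * dv (b - a) (b - a)
    <= (L + mu) * dv (G b - G a) (b - a).
Proof.
move=> Ua Ub.
have eP : P b - P a = (G b - G a) - mu *: (b - a).
  by apply/rowP => j; rewrite /P !mxE; ring.
have [k0|k0] := boolP (0 < kk).
  have H := glob_coco k0 Ua Ub.
  rewrite eP /kk in H; move: (G b - G a) (b - a) H => w u H.
  rewrite !(dotvBl, dotvBr, dotvZl, dotvZr) (dotvC u w) in H.
  nra.
have LE : L = mu.
  apply/eqP; rewrite eq_le muL andbT; move: k0; rewrite /kk subr_gt0 -leNgt.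
  by [].
have H := normLipP Ub Ua.
rewrite LE subrr mul0r in H.
have QQ : dv (P b - P a) (P b - P a) = 0.
  by apply/eqP; rewrite eq_le H dotv_ge0.
have H2 := dotv_eq0 (b - a) QQ.
have H3 := dotv_eq0 (P b - P a) QQ.
rewrite eP LE in QQ H2 H3 *; move: (G b - G a) (b - a) QQ H2 H3 => w u QQ H2 H3.
rewrite !(dotvBl, dotvBr, dotvZl, dotvZr) (dotvC u w) in QQ H2 H3 *.
nra.
Qed.

End Core.

Lemma enorm_le (R : realType) d (v : 'rV[R]_d) c : 0 <= c -> dotv v v <= c ^+ 2 -> enorm v <= c.
Proof. move=> c0 h; have e := enorm_sq v; have n0 := enorm_ge0 v; nra. Qed.

Lemma geo (R : realType) d (X : set 'rV[R]_d) (g h y z xs : 'rV[R]_d) (mu L : R) :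
  0 < mu -> mu <= L -> convex_set_ X -> X z -> X y -> X xs ->
  let theta := 2 * Num.sqrt (mu * L) / (L + mu) in
  let rho := (L - mu) / (L + mu) in
  enorm (z - y) <= theta * enorm (y - xs) ->
  (forall w, X w -> enorm (w - y) <= theta * enorm (y - xs) -> dotv g z <= dotv g w) ->
  (forall w, X w -> 0 <= dotv h (w - xs)) ->
  dotv (g - h) (g - h) + mu * L * dotv (y - xs) (y - xs)
     <= (L + mu) * dotv (g - h) (y - xs) ->
  enorm (z - xs) ^+ 2 <= rho ^+ 2 * enorm (y - xs) ^+ 2.
Proof.
move=> mu0 muL Xc Xz Xy Xxs theta rho hball hmin hfo hco.
have Lm0 : 0 < L + mu by lra.
have [s sE] : {s | s = Num.sqrt (mu * L)} by exists (Num.sqrt (mu * L)).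
have s0 : 0 <= s by rewrite sE sqrtr_ge0.
have s2 : s ^+ 2 = mu * L by rewrite sE sqr_sqrtr // mulr_ge0 //; lra.
have thE : theta = 2 * s / (L + mu) by rewrite /theta sE.
have th0 : 0 <= theta by rewrite thE divr_ge0 //; lra.
have thrho : theta ^+ 2 + rho ^+ 2 = 1.
  rewrite thE /rho; apply/eqP; rewrite -subr_eq0; apply/eqP.
  have -> : (2 * s / (L + mu)) ^+ 2 + ((L - mu) / (L + mu)) ^+ 2 - 1
     = (4 * s ^+ 2 - 4 * mu * L) / (L + mu) ^+ 2.
    by field; rewrite lt0r_neq0.
  by rewrite s2 mulrA subrr mul0r.
have [u uE] : {u | u = y - xs} by exists (y - xs).
have [A AE] : {A | A = z - y} by exists (z - y).
have ezx : z - xs = A + u by rewrite AE uE addrA subrK.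
rewrite ezx -uE in hball hco hmin * ; rewrite -AE in hball.
set r := enorm u in hball hmin hco *.
have r0 : 0 <= r by apply: enorm_ge0.
have uu : dotv u u = r ^+ 2 by rewrite enorm_sq.
rewrite uu in hco.
have AA0 := dotv_ge0 A.
have AA : dotv A A <= theta ^+ 2 * r ^+ 2.
  rewrite -enorm_sq -exprMn; have := enorm_ge0 A; nra.
rewrite enorm_sq !(dotvDl, dotvDr) (dotvC u A) uu.
have [rz|rpos] := eqVneq r 0.
  have z2 : (0:R) ^+ 2 = 0 by rewrite expr2 mulr0.
  rewrite rz z2 mulr0 in AA *.
  have AA' : dotv A A = 0 by apply/eqP; rewrite eq_le AA AA0.
  rewrite (dotv_eq0 u AA') AA'; lra.
have rp : 0 < r by rewrite lt0r rpos r0.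
rewrite leNgt; apply/negP => Hlt.
set D2 := dotv A A + dotv A u + (dotv A u + r ^+ 2) in Hlt.
have D20 : 0 < D2 by apply: le_lt_trans Hlt; rewrite mulr_ge0 // sqr_ge0.
have g1 : 0 <= dotv g (xs - z).
  have [e eE] : {e : R | e = (D2 - rho ^+ 2 * r ^+ 2) / D2} by exists ((D2 - rho ^+ 2 * r ^+ 2) / D2).
  have e0 : 0 < e by rewrite eE divr_gt0 // subr_gt0.
  have e1 : e <= 1.
    rewrite eE ler_pdivrMr // mul1r; have := sqr_ge0 rho; have := sqr_ge0 r; nra.
  have eD : (1 - e) * D2 = rho ^+ 2 * r ^+ 2.
    by rewrite eE; field; rewrite lt0r_neq0.
  have Xe : X (z + e *: (xs - z)).
    have -> : z + e *: (xs - z) = (1 - e) *: z + e *: xs.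
      by apply/rowP => j; rewrite !mxE; ring.
    exact: (Xc _ _ _ Xz Xxs (ltW e0) e1).
  have hb : enorm (z + e *: (xs - z) - y) <= theta * r.
    apply: enorm_le; first by rewrite mulr_ge0.
    have -> : z + e *: (xs - z) - y = (1 - e) *: A - e *: u.
      by apply/rowP => j; rewrite AE uE !mxE; ring.
    rewrite !(dotvBl, dotvBr, dotvZl, dotvZr) (dotvC u A) uu.
    have h1 : (1 - e) * dotv A A <= (1 - e) * (theta ^+ 2 * r ^+ 2).
      by rewrite ler_wpM2l // subr_ge0.
    have h2 : e * ((1 - e) * D2) = e * (rho ^+ 2 * r ^+ 2) by rewrite eD.
    rewrite /D2 in h2.
    rewrite exprMn.
    have h3 : theta ^+ 2 = 1 - rho ^+ 2 by lra.
    rewrite h3 in h1 *.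
    nra.
  have := hmin _ Xe hb.
  rewrite dotvDr dotvZr => h4.
  have : 0 <= e * dotv g (xs - z) by lra.
  by rewrite pmulr_rge0.
have hz := hfo z Xz; rewrite ezx in hz.
have hy := hfo y Xy; rewrite -uE in hy.
have exz : xs - z = - (A + u) by rewrite -ezx opprB.
rewrite exz dotvNr in g1.
have [w wE] : {w | w = g - h} by exists (g - h).
rewrite -wE in hco.
have hw : dotv w (A + u) <= 0 by rewrite wE dotvBl; lra.
set N := enorm w.
have NN : dotv w w = N ^+ 2 by rewrite enorm_sq.
have N0 : 0 <= N by apply: enorm_ge0.
rewrite NN in hco.
have cs : dotv w u <= N * r := CS w u.
have amgm : 2 * s * N * r <= N ^+ 2 + mu * L * r ^+ 2.
  rewrite -s2; have := sqr_ge0 (N - s * r); nra.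
have hwu : theta * N * r <= dotv w u.
  rewrite thE -(ler_pM2l Lm0).
  have -> : (L + mu) * (2 * s / (L + mu) * N * r) = 2 * s * N * r.
    by field; rewrite lt0r_neq0.
  lra.
have Np : 0 < N.
  have h0 : 0 < mu * L * r ^+ 2 by rewrite !mulr_gt0 ?exprn_gt0 //; lra.
  have h1 : 0 < dotv w u by have := sqr_ge0 N; nra.
  have : 0 < N * r by lra.
  by rewrite pmulr_lgt0.
have hAw : dotv A w <= - (theta * N * r).
  rewrite dotvC; move: hw; rewrite dotvDr; lra.
set e := N *: A + (theta * r) *: w.
have ee : dotv e e <= 0.
  rewrite /e !(dotvDl, dotvDr, dotvZl, dotvZr) (dotvC w A) NN.
  have h1 : N ^+ 2 * dotv A A <= N ^+ 2 * (theta ^+ 2 * r ^+ 2).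
    by rewrite ler_wpM2l // sqr_ge0.
  have h2 : N * (theta * r) * dotv A w <= N * (theta * r) * (- (theta * N * r)).
    have hp : 0 <= N * (theta * r).
      apply: mulr_ge0; [exact: N0 | exact: mulr_ge0].
    exact: (@ler_wpM2l _ _ hp _ _ hAw).
  nra.
have ee0 : dotv e e = 0 by apply/eqP; rewrite eq_le ee dotv_ge0.
have eu := dotv_eq0 u ee0.
rewrite /e !(dotvDl, dotvZl) in eu.
have h5 : N * dotv A u <= N * (- (theta ^+ 2 * r ^+ 2)).
  have h6 : theta * r * (theta * N * r) <= theta * r * dotv w u.
    by rewrite ler_wpM2l // mulr_ge0.
  nra.
rewrite ler_pM2l // in h5.
have e9 : rho ^+ 2 * r ^+ 2 = r ^+ 2 - theta ^+ 2 * r ^+ 2.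
  have -> : rho ^+ 2 = 1 - theta ^+ 2 by lra.
  ring.
have : D2 <= rho ^+ 2 * r ^+ 2 by rewrite e9 /D2; lra.
by rewrite leNgt Hlt.
Qed.

Lemma thead_behead (T : Type) k (s : k.+1.-tuple T) : thead s :: behead s = s :> seq T.
Proof. by rewrite [in RHS](tuple_eta s). Qed.

Lemma sum_tupleS (R : realType) (T : finType) k (Fn : seq T -> R) :
  \sum_(s : k.+1.-tuple T) Fn s = \sum_(t : k.-tuple T) \sum_(i : T) Fn (rcons t i).
Proof.
rewrite pair_big /=.
pose h (p : k.-tuple T * T) : k.+1.-tuple T := [tuple of rcons p.1 p.2].
pose hi (s : k.+1.-tuple T) : k.-tuple T * T :=
  ([tuple of belast (thead s) (behead s)], last (thead s) (behead s)).
rewrite (reindex h) /=; first by [].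
exists hi => [[t i] _ | s _].
  have E := thead_behead (h (t, i)).
  rewrite lastI /= in E.
  case: (rcons_inj E) => E1 E2.
  by rewrite /hi; congr pair => //; apply: val_inj.
apply: val_inj => /=.
by rewrite -lastI thead_behead.
Qed.

End Helpers.
Import Helpers.

Lemma enorm_tri (R : realType) d (a b : 'rV[R]_d) : enorm (a + b) <= enorm a + enorm b.
Proof.
apply: enorm_le; first by rewrite addr_ge0 ?enorm_ge0.
rewrite !(dotvDl, dotvDr) (dotvC b a) -!enorm_sq.
have := CS a b; lra.
Qed.

Lemma enormN (R : realType) d (a : 'rV[R]_d) : enorm (- a) = enorm a.
Proof. by rewrite /enorm dotvNl dotvNr opprK. Qed.

Lemma sq_le (R : realType) (p q : R) : 0 <= q -> p ^+ 2 <= q ^+ 2 -> p <= q.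
Proof. move=> q0 h; nra. Qed.

Theorem theorem13 (R : realType) (d n : nat) (hn : (0 < n)%N)
  (X U : set 'rV[R]_d) (F : 'I_n -> 'rV[R]_d -> R) (mu L : 'I_n -> R)
  (xstar : 'rV[R]_d) (xs : 'I_n -> 'rV[R]_d) (x0 : 'rV[R]_d)
  (x : seq 'I_n -> 'rV[R]_d) :
  X !=set0 -> closed X -> convex_set_ X ->
  open U -> convex_set_ U -> X `<=` U ->
  (forall i, forall y, U y -> differentiable (F i) y) ->
  (forall i, 0 < mu i /\ mu i <= L i) ->
  (forall i, strongly_convex_on (mu i) (F i) U) ->
  (forall i, smooth_on (L i) (F i) U) ->
  is_argmin (fun y => n%:R^-1 * \sum_(i < n) F i y) X xstar ->
  (forall i, is_argmin (F i) X (xs i)) ->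
  let D := \big[Num.max/0]_(i < n) enorm (xs i - xstar) in
  let theta := fun i => 2 * Num.sqrt (mu i * L i) / (L i + mu i) in
  let rho := fun i => (L i - mu i) / (L i + mu i) in
  let rhobar := n%:R^-1 * \sum_(i < n) rho i in
  X x0 -> x [::] = x0 ->
  (forall (s : seq 'I_n) (i : 'I_n),
     is_argmin (fun z => dotv (grad (F i) (x s)) z)
       (X `&` eball (x s) (theta i * enorm (x s - xs i))) (x (rcons s i))) ->
  (forall (s : seq 'I_n) (i : 'I_n),
     enorm (x (rcons s i) - xs i) ^+ 2 <= rho i ^+ 2 * enorm (x s - xs i) ^+ 2) /\
  (forall k : nat,
     (n ^ k)%:R^-1 * \sum_(s : k.-tuple 'I_n) enorm (x s - xstar)
       <= rhobar ^+ k * enorm (x0 - xstar) + (1 + rhobar) / (1 - rhobar) * D).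
Proof.
move=> Xne Xcl Xc Uop Uc XU Fdiff hmuL hSC hLip hxstar hxs D theta rho rhobar
  X0 Hx0 hstep.
have Uo : forall a, U a ->
    exists2 del, 0 < del & forall e, dotv e e <= del ^+ 2 -> U (a + e).
  by move=> a Ua; apply: open_ball.
have Xs : forall s, X (x s).
  move=> s; case/lastP: s => [|s j]; first by rewrite Hx0.
  by have [[Xz _] _] := hstep s j.
have part1 : forall (s : seq 'I_n) (i : 'I_n),
    enorm (x (rcons s i) - xs i) ^+ 2 <= rho i ^+ 2 * enorm (x s - xs i) ^+ 2.
  move=> s i.
  have [mu0 muL] := hmuL i.
  have [[Xz Bz] zmin] := hstep s i.
  have [Xxs _] := hxs i.
  apply: (@geo _ _ X (grad (F i) (x s)) (grad (F i) (xs i)) (x s) (x (rcons s i))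
     (xs i) (mu i) (L i) mu0 muL Xc Xz (Xs s) Xxs).
  - exact: Bz.
  - by move=> w Xw Bw; apply: zmin; split.
  - move=> w Xw; exact: (first_order mu0 muL (hSC i) (hLip i) Xc XU (hxs i) Xw).
  - exact: (coco mu0 muL Uc (hSC i) (hLip i) Uo (XU _ Xxs) (XU _ (Xs s))).
split => //.
have rho0 : forall i, 0 <= rho i.
  by move=> i; have [m0 mL] := hmuL i; rewrite /rho divr_ge0 //; lra.
have rho1 : forall i, rho i < 1.
  move=> i; have [m0 mL] := hmuL i; rewrite /rho ltr_pdivrMr; lra.
have nr0 : 0 < n%:R :> R by rewrite ltr0n.
have hsum : \sum_(i < n) rho i = n%:R * rhobar.
  by rewrite /rhobar mulrA mulfV ?mul1r // lt0r_neq0.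
have rb0 : 0 <= rhobar by rewrite /rhobar mulr_ge0 ?invr_ge0 ?ler0n ?sumr_ge0.
have rb1 : rhobar < 1.
  have h1 : 0 < \sum_(i < n) (1 - rho i).
    rewrite (bigD1 (Ordinal hn)) //= ltr_pwDl ?subr_gt0 //.
    by apply: sumr_ge0 => i _; rewrite subr_ge0 ltW.
  rewrite sumrB sumr_const card_ord hsum in h1.
  have : n%:R * rhobar < n%:R * 1 by rewrite mulr1; move: h1; rewrite -mulr_natr mul1r subr_gt0.
  by rewrite ltr_pM2l.
have hD : forall i, enorm (xs i - xstar) <= D.
  by move=> i; rewrite /D; apply: le_bigmax.
have D0 : 0 <= D by apply: le_trans (hD (Ordinal hn)); exact: enorm_ge0.
have one : forall (s : seq 'I_n) i,
    enorm (x (rcons s i) - xstar) <= rho i * enorm (x s - xstar) + (1 + rho i) * D.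
  move=> s i.
  have h1 : enorm (x (rcons s i) - xs i) <= rho i * enorm (x s - xs i).
    apply: sq_le; first by rewrite mulr_ge0 ?rho0 ?enorm_ge0.
    by rewrite exprMn; apply: part1.
  have h2 : enorm (x (rcons s i) - xstar) <= enorm (x (rcons s i) - xs i) + enorm (xs i - xstar).
    by have := @enorm_tri _ _ (x (rcons s i) - xs i) (xs i - xstar); rewrite addrA subrK.
  have h3 : enorm (x s - xs i) <= enorm (x s - xstar) + enorm (xs i - xstar).
    have := @enorm_tri _ _ (x s - xstar) (- (xs i - xstar)).
    by rewrite enormN opprB addrA subrK.
  have h4 : rho i * enorm (x s - xs i) <= rho i * (enorm (x s - xstar) + enorm (xs i - xstar)).
    exact: (@ler_wpM2l _ _ (rho0 i) _ _ h3).
  have h5 : (1 + rho i) * enorm (xs i - xstar) <= (1 + rho i) * D.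
    by apply: (@ler_wpM2l _ _ _ _ _ (hD i)); rewrite addr_ge0 ?rho0.
  lra.
set C := (1 + rhobar) / (1 - rhobar) * D.
have C0 : 0 <= C by rewrite /C mulr_ge0 // divr_ge0 //; lra.
have CE : rhobar * C + (1 + rhobar) * D = C.
  by rewrite /C; field; rewrite subr_eq0 eq_sym lt_eqF.
elim=> [|k IH].
  rewrite (eq_bigr (fun _ => enorm (x [::] - xstar))); last first.
    by move=> t _; rewrite (tuple0 t).
  rewrite sumr_const card_tuple card_ord !expn0 mul1r invr1 mul1r Hx0 mulr1n.
  by rewrite lerDl.
rewrite (@sum_tupleS _ _ k (fun s => enorm (x s - xstar))).
have inner : forall t : k.-tuple 'I_n,
   \sum_(i < n) enorm (x (rcons t i) - xstar)
     <= n%:R * (rhobar * enorm (x t - xstar) + (1 + rhobar) * D).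
  move=> t; apply: le_trans (ler_sum _ (fun i _ => one t i)) _.
  rewrite big_split /= -!mulr_suml big_split /= sumr_const card_ord hsum.
  by rewrite -mulr_natr mul1r le_eqVlt; apply/orP; left; apply/eqP; ring.
have S1 : \sum_(t : k.-tuple 'I_n) \sum_(i < n) enorm (x (rcons t i) - xstar)
   <= n%:R * (rhobar * \sum_(t : k.-tuple 'I_n) enorm (x t - xstar)
              + (n%:R ^+ k) * ((1 + rhobar) * D)).
  apply: le_trans (ler_sum _ (fun t _ => inner t)) _.
  rewrite -mulr_sumr big_split /= -mulr_sumr sumr_const card_tuple card_ord.
  suff -> : (1 + rhobar) * D *+ n ^ k = (n%:R ^+ k) * ((1 + rhobar) * D) by [].
  by rewrite -natrX mulr_natl.
rewrite natrX in IH *.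
move: IH S1.
set Sk := \sum_(t : k.-tuple 'I_n) enorm (x t - xstar).
set S := \sum_(t : k.-tuple 'I_n) \sum_(i < n) _.
move=> IH S1.
clearbody Sk S.
have nk0 : 0 < n%:R ^+ k :> R by rewrite exprn_gt0.
have E1 : (n%:R ^+ k.+1)^-1 * S <= rhobar * ((n%:R ^+ k)^-1 * Sk) + (1 + rhobar) * D.
  rewrite exprS.
  have h : (n%:R * n%:R ^+ k)^-1 * S <=
     (n%:R * n%:R ^+ k)^-1 * (n%:R * (rhobar * Sk + n%:R ^+ k * ((1 + rhobar) * D))).
    by apply: ler_wpM2l => //; rewrite invr_ge0 mulr_ge0 // ltW.
  apply: (le_trans h).
  have nn0 : n%:R != 0 :> R by rewrite lt0r_neq0.
  have ak0 : n%:R ^+ k != 0 :> R by rewrite lt0r_neq0.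
  move: (n%:R ^+ k) ak0 => a ak0.
  have -> : (n%:R * a)^-1 * (n%:R * (rhobar * Sk + a * ((1 + rhobar) * D)))
     = rhobar * (a^-1 * Sk) + (1 + rhobar) * D by field; rewrite ?nn0 ?ak0.
  by [].

clearbody C.
rewrite natrX.
have h2 : rhobar * ((n%:R ^+ k)^-1 * Sk) <= rhobar * (rhobar ^+ k * enorm (x0 - xstar) + C).
  exact: (@ler_wpM2l _ _ rb0 _ _ IH).
rewrite [rhobar ^+ k.+1]exprS.
lra.
Qed.
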